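(* For a positive integer $k$, let $\mathcal{H}'_k$ be the random hypergraph with vertex set $[\lceil k\log k\rceil]$ whose edges are $k$ sets $e_1,\dots,e_k$, each chosen independently and uniformly at random from the $k$-element subsets of $[\lceil k\log k\rceil]$. Then, with probability tending to $1$ as $k\to\infty$, for every set $X\subseteq[\lceil k\log k\rceil]$ of size $\lfloor\log^2k-10\log k\log\log k\rfloor$ there are at least $\frac{\log^9 k}{2}$ indices $j$ with $e_j\cap X=\emptyset$.
   Context: $\log$ denotes the natural logarithm; $[m]=\{1,\dots,m\}$. *)

(* Defs.v *)
From HB Require Import structures.
From mathcomp Require Import all_boot all_order all_algebra.
From mathcomp Require Import all_classical all_reals all_analysis.
Set Implicit Arguments. Unset Strict Implicit. Unset Printing Implicit Defensive.
Import Order.TTheory GRing.Theory Num.Theory.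
Local Open Scope ring_scope.

(* Number of vertices: ceil(k log k) (nonnegative for every k, so absz is exact). *)
Definition nverts (R : realType) (k : nat) : nat :=
  `| Num.ceil ((k%:R : R) * ln (k%:R : R)) |%N.

(* Size of the test sets X: floor(log^2 k - 10 log k log log k) (an integer,
   possibly negative for small k, in which case no set X has that size). *)
Definition xsize (R : realType) (k : nat) : int :=
  Num.floor (ln (k%:R : R) ^+ 2 - 10 * ln (k%:R : R) * ln (ln (k%:R : R))).

Definition outcome (R : realType) (k : nat) := {ffun 'I_k -> {set 'I_(nverts R k)}}.

Definition admissible (R : realType) (k : nat) : {set outcome R k} :=
  [set e : outcome R k | [forall j, #|e j| == k]].

Definition good (R : realType) (k : nat) : {set outcome R k} :=
  [set e : outcome R k |
     [forall X : {set 'I_(nverts R k)},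
        ((#|X|%:Z == xsize R k) ==>
         ((ln (k%:R : R) ^+ 9 / 2) <= (#|[set j : 'I_k | e j :&: X == finset.set0]|%:R : R)))]].

(* Probability of the good event when e_1,...,e_k are independent and each uniform
   on the k-subsets: uniform measure on admissible outcomes. *)
Definition prob_good (R : realType) (k : nat) : R :=
  #|good R k :&: admissible R k|%:R / #|admissible R k|%:R.

(* Main.v *)
Require Import Defs.
From HB Require Import structures.
From mathcomp Require Import all_boot all_order all_algebra.
From mathcomp Require Import all_classical all_reals all_analysis.
From mathcomp Require Import ring lra zify.
From Stdlib Require Import Lia.
Import Order.TTheory GRing.Theory Num.Theory.
Import numFieldNormedType.Exports.
Local Open Scope ring_scope.
Set Implicit Arguments. Unset Strict Implicit. Unset Printing Implicit Defensive.

Section Comb.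
Variable R : realType.

Lemma sum_family (T I : finType) (k : nat) (g : {set T} -> R) :
  \sum_(e : {ffun I -> {set T}} | [forall j, #|e j| == k]) \prod_j g (e j)
  = (\sum_(S : {set T} | #|S| == k) g S) ^+ #|I|.
Proof.
rewrite -prodr_const bigA_distr_big; apply: eq_bigl => e.
by apply/forallP/familyP => H j; apply: H.
Qed.


Lemma sum_split (T : finType) (k : nat) (X : {set T}) :
  \sum_(S : {set T} | #|S| == k) (if S :&: X == finset.set0 then 2^-1 else 1 : R)
  = #|[set S : {set T} | #|S| == k]|%:R
    - #|[set S : {set T} | #|S| == k & S :&: X == finset.set0]|%:R / 2.
Proof.
rewrite (bigID (fun S => S :&: X == finset.set0)) /=.
rewrite (eq_bigr (fun _ => 2^-1)); last by move=> S /andP[_ ->].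
rewrite [X in _ + X](eq_bigr (fun _ => 1)); last by move=> S /andP[_ /negbTE ->].
rewrite !sumr_const.
rewrite -(cardsID [set S : {set T} | S :&: X == finset.set0] [set S : {set T} | #|S| == k]).
have E1 : #|[set S : {set T} | #|S| == k] :&: [set S | S :&: X == finset.set0]| = #|(fun i : {set T} => (#|i| == k) && (i :&: X == finset.set0))|.
  by apply: eq_card => S; rewrite !inE.
have E2 : #|[set S : {set T} | #|S| == k] :\: [set S | S :&: X == finset.set0]| = #|(fun i : {set T} => (#|i| == k) && (i :&: X != finset.set0))|.
  by apply: eq_card => S; rewrite !inE andbC.
have E3 : #|[set S : {set T} | #|S| == k & S :&: X == finset.set0]| = #|(fun i : {set T} => (#|i| == k) && (i :&: X == finset.set0))|.
  by apply: eq_card => S; rewrite !inE.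
rewrite E1 E2 E3 natrD -mulr_natl.
set a := (#|_|%:R); set b := (#|_|%:R).
by field.
Qed.

Definition gX (T : finType) (X S : {set T}) : R :=
  if S :&: X == finset.set0 then 2^-1 else 1.

Lemma gX_ge0 (T : finType) (X S : {set T}) : 0 <= gX X S.
Proof. by rewrite /gX; case: ifP. Qed.

Lemma prod_gX (I T : finType) (e : I -> {set T}) X :
  \prod_j gX X (e j) = 2^-1 ^+ #|[set j | e j :&: X == finset.set0]|.
Proof.
rewrite /gX -big_mkcond /= -prodr_const; apply: eq_bigl => j; by rewrite inE.
Qed.

Lemma one_le (m : nat) (L : R) : m%:R < L -> 1 <= expR L * 2^-1 ^+ m.
Proof.
move=> mL.
have h2 : (2 : R) <= expR 1 by have := expR_ge1Dx (1 : R); rewrite (_ : 1 + 1 = 2 :> R) //.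
have h : (2 : R) ^+ m <= expR L.
  apply: (le_trans (y := expR 1 ^+ m)).
    by apply: lerXn2r => //; rewrite nnegrE // ?expR_ge0.
  by rewrite -expRM_natl mulr1 ler_expR ltW.
rewrite exprVn ler_pdivlMr ?exprn_gt0 // mul1r; exact: h.
Qed.

Lemma bad_bound k :
  #|admissible R k :\: good R k|%:R <=
  \sum_(X : {set 'I_(nverts R k)} | #|X|%:Z == xsize R k)
     (expR (ln (k%:R : R) ^+ 9 / 2) * \sum_(e in admissible R k) \prod_j gX X (e j)).
Proof.
set A := admissible R k; set G := good R k; set L := ln _ ^+ 9 / 2.
set P := fun X : {set 'I_(nverts R k)} => #|X|%:Z == xsize R k.
have Fge0 : forall (e : outcome R k) (X : {set 'I_(nverts R k)}), 0 <= expR L * \prod_j gX X (e j).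
  by move=> e X; rewrite mulr_ge0 ?expR_ge0 // prodr_ge0 // => j _; apply: gX_ge0.
have step : forall e : outcome R k, e \in A :\: G ->
    1 <= \sum_(X | P X) expR L * \prod_j gX X (e j).
  move=> e; rewrite inE => /andP[eG _].
  move: eG; rewrite /G /good inE => /forallPn [X].
  rewrite negb_imply => /andP[PX].
  rewrite -ltNge => Hlt.
  rewrite (bigD1 X) //=.
  apply: le_trans (one_le Hlt) _.
  rewrite prod_gX lerDl; apply: sumr_ge0 => Y _; exact: Fge0.
apply: (le_trans (y := \sum_(e in A :\: G) \sum_(X | P X) expR L * \prod_j gX X (e j))).
  rewrite -sumr_const; apply: ler_sum => e eAG; exact: step.
apply: (le_trans (y := \sum_(e in A) \sum_(X | P X) expR L * \prod_j gX X (e j))).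
  rewrite [X in _ <= X](@big_setID _ _ _ _ A G) /= lerDr.
  by apply: sumr_ge0 => e _; apply: sumr_ge0 => X _; exact: Fge0.
rewrite exchange_big /=; apply: ler_sum => X _; rewrite mulr_sumr //.
Qed.

Lemma sum_adm k (g : {set 'I_(nverts R k)} -> R) :
  \sum_(e in admissible R k) \prod_j g (e j) = (\sum_(S : {set 'I_(nverts R k)} | #|S| == k) g S) ^+ k.
Proof.
have := sum_family 'I_k k g; rewrite card_ord => <-.
by apply: eq_bigl => e; rewrite inE.
Qed.

Lemma cardN (T : finType) k :
  #|[set S : {set T} | #|S| == k]| = 'C(#|T|, k).
Proof. exact: card_draws. Qed.

Lemma cardQ (T : finType) k (X : {set T}) :
  #|[set S : {set T} | #|S| == k & S :&: X == finset.set0]| = 'C(#|T| - #|X|, k).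
Proof.
rewrite -(cardsC X) addKn -cards_draws; apply: eq_card => S.
by rewrite !inE finset.setI_eq0 finset.disjoints_subset andbC.
Qed.

Lemma card_adm k :
  #|admissible R k|%:R = ('C(nverts R k, k)%:R : R) ^+ k.
Proof.
rewrite -sumr_const (eq_bigr (fun e => \prod_(j < k) (1:R))); last by move=> *; rewrite big1_eq.
have h := @sum_adm k (fun _ => (1:R)); simpl in h; rewrite h sumr_const; congr (_ ^+ _); congr (_%:R).
rewrite -[in RHS](card_ord (nverts R k)) -cardN; apply: eq_card => S; by rewrite inE.
Qed.

Lemma sum_gX k (X : {set 'I_(nverts R k)}) :
  \sum_(e in admissible R k) \prod_j gX X (e j) =
  ('C(nverts R k, k)%:R - 'C(nverts R k - #|X|, k)%:R / 2) ^+ k.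
Proof.
rewrite sum_adm /gX sum_split cardN cardQ card_ord //.
Qed.

Lemma prob_eq k : (0 < 'C(nverts R k, k))%N ->
  prob_good R k = 1 - #|admissible R k :\: good R k|%:R / #|admissible R k|%:R.
Proof.
move=> Npos.
have Apos : (0 : R) < #|admissible R k|%:R by rewrite card_adm exprn_gt0 // ltr0n.
rewrite /prob_good finset.setIC -(cardsID (good R k) (admissible R k)) natrD.
move: Apos; rewrite -(cardsID (good R k) (admissible R k)) natrD => Apos.
by apply/eqP; rewrite eq_sym subr_eq -mulrDl divff // lt0r_neq0.
Qed.

Lemma eps_bound k s : xsize R k = s%:Z -> (0 < 'C(nverts R k, k))%N ->
  #|admissible R k :\: good R k|%:R / #|admissible R k|%:R <=
  'C(nverts R k, s)%:R * expR (ln (k%:R : R) ^+ 9 / 2) *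
   (1 - 'C(nverts R k - s, k)%:R / (2 * 'C(nverts R k, k)%:R)) ^+ k.
Proof.
move=> hs Npos.
have Np : (0 : R) < 'C(nverts R k, k)%:R by rewrite ltr0n.
rewrite card_adm ler_pdivrMr ?exprn_gt0 //.
apply: le_trans (bad_bound k) _.
set L := expR _.
rewrite (eq_bigr (fun _ => L * ('C(nverts R k, k)%:R - 'C(nverts R k - s, k)%:R / 2) ^+ k)); last first.
  by move=> X; rewrite hs eqz_nat => /eqP <-; rewrite sum_gX.
rewrite sumr_const.
have -> : #|(fun X : {set 'I_(nverts R k)} => #|X|%:Z == xsize R k)| = 'C(nverts R k, s).
  rewrite -[in RHS](card_ord (nverts R k)) -cardN; apply: eq_card => X.
  by rewrite inE hs.
have E : ('C(nverts R k, k)%:R - 'C(nverts R k - s, k)%:R / 2 : R) ^+ k =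
   (1 - 'C(nverts R k - s, k)%:R / (2 * 'C(nverts R k, k)%:R)) ^+ k * 'C(nverts R k, k)%:R ^+ k.
  by rewrite -exprMn; congr (_ ^+ _); field; rewrite lt0r_neq0.
rewrite E; rewrite -[_ *+ 'C(nverts R k, s)]mulr_natl !mulrA; exact: lexx.
Qed.
End Comb.

Lemma bin_le_exp n s : ('C(n, s) <= n ^ s)%N.
Proof.
apply: leq_trans (_ : _ <= 'C(n,s) * s`!)%N _; first by rewrite leq_pmulr ?fact_gt0.
rewrite bin_ffact ffact_prod.
apply: leq_trans (_ : _ <= \prod_(i < s) n)%N _.
  by apply: leq_prod => i _; apply: leq_subr.
by rewrite prod_nat_const card_ord.
Qed.

Section An.
Variable R : realType.

Lemma binratio (n s k : nat) : (k + s < n)%N ->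
  'C(n, k)%:R * (1 - k%:R / (n - s)%:R) ^+ s <= ('C(n - s, k)%:R : R).
Proof.
move=> hn.
pose x : R := k%:R / (n - s)%:R.
have hns : (0 : R) < (n - s)%:R by rewrite ltr0n subn_gt0; apply: leq_ltn_trans hn; exact: leq_addl.
have x1 : x <= 1.
  rewrite /x ler_pdivrMr // mul1r ler_nat; lia.
suff : forall i, (i <= s)%N -> 'C(n, k)%:R * (1 - x) ^+ i <= ('C(n - i, k)%:R : R) by apply.
elim => [|i IH] hi; first by rewrite expr0 mulr1 subn0.
have IH' := IH (ltnW hi).
have hni : (0 : R) < (n - i)%:R by rewrite ltr0n; lia.
have E : ('C(n - i.+1, k)%:R : R) = (1 - k%:R / (n - i)%:R) * 'C(n - i, k)%:R.
  have h : ((n - i) * 'C(n - i.+1, k) = (n - i - k) * 'C(n - i, k))%N by rewrite subnS mul_bin_down.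
  have hR := congr1 (fun m => (m%:R : R)) h; rewrite /= !natrM in hR.
  have e : ((n - i - k)%:R : R) = (n - i)%:R - k%:R by rewrite natrB //; lia.
  rewrite e in hR.
  apply: (mulfI (lt0r_neq0 hni)); rewrite hR; field; exact: lt0r_neq0.
rewrite E exprS mulrCA; apply: ler_pM => //.
- by rewrite subr_ge0.
- by rewrite mulr_ge0 // exprn_ge0 // subr_ge0.
- rewrite lerD2l lerN2 /x; apply: ler_pM => //.
  rewrite lef_pV2 ?posrE // ler_nat; lia.
Qed.

Lemma pow_lb (x : R) (s : nat) : 0 <= x < 1 ->
  expR (- (s%:R * (x / (1 - x)))) <= (1 - x) ^+ s.
Proof.
case/andP => x0 x1.
have hx : 0 < 1 - x by rewrite subr_gt0.
rewrite -mulrN expRM_natl; apply: lerXn2r; [by rewrite nnegrE expR_ge0 | by rewrite nnegrE ltW | ].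
have hy : 0 < 1 + x / (1 - x) by have := divr_ge0 x0 (ltW hx); lra.
have e : (1 + x / (1 - x))^-1 = 1 - x.
  by field; rewrite ?lt0r_neq0 //; rewrite (_ : 1 - x + x = 1) ?oner_neq0 //; ring.
rewrite expRN; apply: (@le_trans _ _ ((1 + x / (1 - x))^-1)).
  by rewrite lef_pV2 ?posrE ?expR_gt0 // expR_ge1Dx.
by rewrite e.
Qed.

Lemma pow_ub (z : R) (k : nat) : z <= 1 -> (1 - z) ^+ k <= expR (- (k%:R * z)).
Proof.
move=> z1; rewrite -mulrN expRM_natl; apply: lerXn2r; rewrite ?nnegrE ?expR_ge0 ?subr_ge0 //.
exact: expR_ge1Dx.
Qed.

Lemma main_est (k n s : nat) (l : R) : (0 < k)%N ->
  l = ln k%:R -> expR 1 + 4 * expR 2 + 6 <= l ->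
  k%:R * l <= n%:R -> n%:R <= k%:R * l + 1 ->
  s%:R <= l ^+ 2 - 10 * l * ln l ->
  (0 < 'C(n, k))%N /\
  'C(n, s)%:R * expR (l ^+ 9 / 2) * (1 - 'C(n - s, k)%:R / (2 * 'C(n, k)%:R)) ^+ k
    <= (k%:R : R)^-1.
Proof.
move=> k0 hl hl0 hn1 hn2 hs.
have e1 := expR_gt0 (1 : R); have e2 := expR_gt0 (2 : R).
have l6 : 6 <= l by lra.
have lpos : 0 < l by lra.
have kpos : (0 : R) < k%:R by rewrite ltr0n.
have kE : k%:R = expR l by rewrite hl lnK.
have lam : 1 <= ln l.
  by rewrite -[X in X <= _]expRK ler_ln ?posrE //; lra.
have kl2 : l ^+ 2 <= k%:R.
  have := expR_ge1Dxn 2 (ltW lpos); rewrite -kE.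
  have -> : (3`!%:R : R) = 6 by [].
  have -> : l ^+ 3 = l * l ^+ 2 by rewrite exprS.
  have t0 : 0 <= l ^+ 2 by rewrite exprn_ge0 // ltW.
  move: t0; set t := l ^+ 2 => t0 h; nra.
have s0 : (0 : R) <= s%:R by [].
have lam0 : 0 <= 10 * l * ln l by apply: mulr_ge0; [apply: mulr_ge0|]; lra.
have sl2 : s%:R <= l ^+ 2 by lra.
have sk : (s%:R : R) <= k%:R by lra.
have kl6 : 6 * k%:R <= k%:R * l :> R by rewrite mulrC ler_wpM2l // ltW.
have hkn : (k + s < n)%N.
  rewrite -(ltr_nat R) natrD; clear -sk kl6 hn1 kpos; lra.
have Npos : (0 < 'C(n, k))%N by rewrite bin_gt0; apply: leq_trans (leq_addr s k) (ltnW hkn).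
split => //.
set N := ('C(n, k)%:R : R); set Q := ('C(n - s, k)%:R : R).
have Np : 0 < N by rewrite ltr0n.
have QN : Q <= N by rewrite ler_nat leq_bin2l // leq_subr.
have sn : (s <= n)%N by apply: leq_trans (leq_addl k s) (ltnW hkn).
have hns : (n - s)%:R = n%:R - s%:R :> R by rewrite natrB.
pose D : R := n%:R - s%:R - k%:R.
have Dk : k%:R * (l - 2) <= D by rewrite /D; clear -sk hn1; lra.
have Dpos : 0 < D.
  apply: lt_le_trans Dk; apply: mulr_gt0 => //; lra.
pose x : R := k%:R / (n - s)%:R.
have nsp : (0:R) < n%:R - s%:R by move: Dpos; rewrite /D; clear -kpos; lra.
have x0 : 0 <= x by rewrite /x divr_ge0 // ltW // hns.
have x1 : x < 1 by rewrite /x hns ltr_pdivrMr // mul1r; move: Dpos; rewrite /D; clear; lra.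
have hxx : x / (1 - x) = k%:R / D.
  rewrite /x hns /D; field; rewrite ?lt0r_neq0 //.
have hQ2 : N * expR (- (s%:R * (k%:R / D))) <= Q.
  apply: (@le_trans _ _ (N * (1 - x) ^+ s)); last exact: binratio hkn.
  apply: ler_wpM2l; first exact: ltW.
  rewrite -hxx; apply: pow_lb; by rewrite x0 x1.
have l10 : 10 * ln l <= l.
  have h1 : l * (10 * ln l) <= l * l.
    have : 10 * l * ln l <= l ^+ 2 by move: s0 hs; clear; lra.
    by rewrite mulrA (mulrC l) expr2.
  by rewrite -(ler_pM2l lpos).
have F : s%:R <= (l - 10 * ln l + 2) * (l - 2).
  have -> : (l - 10 * ln l + 2) * (l - 2) = l ^+ 2 - 10 * l * ln l + (20 * ln l - 4) by rewrite expr2; ring.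
  by move: hs lam; clear; lra.
have hE : s%:R * (k%:R / D) <= l - 10 * ln l + 2.
  rewrite mulrA ler_pdivrMr //.
  apply: (@le_trans _ _ ((l - 10 * ln l + 2) * (k%:R * (l - 2)))); last first.
    by apply: ler_wpM2l => //; move: l10; clear; lra.
  rewrite mulrCA [s%:R * _]mulrC; apply: ler_wpM2l; [exact: ltW | exact: F].
have eA : l ^+ 10 * expR (-2) = k%:R * expR (- (l - 10 * ln l + 2)).
  rewrite kE -expRD (_ : l + - (l - 10 * ln l + 2) = 10%:R * ln l + -2); last by ring.
  by rewrite expRD expRM_natl lnK.
have kQN : l ^+ 10 * expR (-2) <= k%:R * (Q / N).
  rewrite eA; apply: ler_wpM2l; first exact: ltW.
  apply: (@le_trans _ _ (expR (- (s%:R * (k%:R / D))))).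
    by rewrite ler_expR lerN2.
  by rewrite ler_pdivlMr // mulrC.
have hpow : (1 - Q / (2 * N)) ^+ k <= expR (- (l ^+ 10 * expR (-2) / 2)).
  apply: (@le_trans _ _ (expR (- (k%:R * (Q / (2 * N)))))).
    apply: pow_ub; by rewrite ler_pdivrMr ?mulr_gt0 // mul1r; move: QN Np; clear; lra.
  rewrite ler_expR lerN2.
  have -> : k%:R * (Q / (2 * N)) = k%:R * (Q / N) / 2 by field; rewrite lt0r_neq0.
  by move: kQN; clear; lra.
have hC : ('C(n, s)%:R : R) <= expR (2 * l ^+ 3).
  have h1 : ('C(n, s)%:R : R) <= n%:R ^+ s by rewrite -natrX ler_nat bin_le_exp.
  have k1l : 1 + l <= k%:R by rewrite kE; exact: expR_ge1Dx.
  have h2 : (n%:R : R) <= k%:R ^+ 2.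
    have hk : 0 <= k%:R - 1 - l by move: k1l; clear; lra.
    have := mulr_ge0 (ltW kpos) hk.
    rewrite expr2; move: hn2 k1l lpos; clear; nra.
  have h3 : (n%:R : R) ^+ s <= (k%:R ^+ 2) ^+ s by apply: lerXn2r; rewrite // nnegrE // exprn_ge0 // ltW.
  apply: (le_trans h1); apply: (le_trans h3).
  rewrite kE -exprM -expRM_natl ler_expR natrM.
  have : s%:R * l <= l ^+ 2 * l by apply: ler_wpM2r => //; exact: ltW.
  by rewrite (exprSr l 2); clear; lra.
have lc : 4 <= l * expR (-2).
  rewrite expRN ler_pdivlMr //; move: hl0 e1; clear; lra.
have q0 : 0 <= 1 - Q / (2 * N).
  rewrite subr_ge0 ler_pdivrMr ?mulr_gt0 // mul1r; move: QN Np; clear; lra.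
apply: (@le_trans _ _ (expR (2 * l ^+ 3) * expR (l ^+ 9 / 2) * expR (- (l ^+ 10 * expR (-2) / 2)))).
  apply: ler_pM => //.
  - by rewrite exprn_ge0.
  - by apply: ler_pM => //; rewrite expR_ge0.
rewrite -!expRD kE -expRN ler_expR.
have h5 : 1 <= l ^+ 5 by rewrite exprn_ege1 //; move: l6; clear; lra.
have h6 : 3 <= l ^+ 6.
  rewrite exprS; move: h5 l6; clear; nra.
have a0 : 0 <= l ^+ 3 by rewrite exprn_ge0 // ltW.
have b3 : 3 * l ^+ 3 <= l ^+ 9.
  rewrite (_ : 9 = 3 + 6)%N // exprD.
  move: h6 a0; clear; nra.
have a1 : l <= l ^+ 3.
  have : 1 <= l ^+ 2 by rewrite exprn_ege1 //; move: l6; clear; lra.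
  rewrite exprS; move: l6; clear; nra.
have b0 : 0 <= l ^+ 9 by rewrite exprn_ge0 // ltW.
have hb : 4 * l ^+ 9 <= l ^+ 10 * expR (-2).
  rewrite (exprSr l 9) -mulrA [4 * _]mulrC; apply: ler_wpM2l => //.
move: hb b3 a1 lpos; clear; lra.
Qed.
End An.

Section Glue.
Variable R : realType.

Lemma nv_bounds k : 0 <= ln (k%:R : R) ->
  k%:R * ln k%:R <= (nverts R k)%:R :> R /\ (nverts R k)%:R <= k%:R * ln k%:R + 1 :> R.
Proof.
move=> l0; set x := (k%:R * ln k%:R : R).
have x0 : 0 <= x by rewrite mulr_ge0.
rewrite /nverts -/x natr_absz ger0_norm; last by rewrite ceil_ge0; lra.
split; first exact: ceil_ge.
have := ceilB1_lt x; rewrite intrB; lra.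
Qed.

Lemma key k : (0 < k)%N -> expR 1 + 4 * expR 2 + 6 <= ln (k%:R : R) ->
  (0 < 'C(nverts R k, k))%N /\
  #|admissible R k :\: good R k|%:R / #|admissible R k|%:R <= (k%:R : R)^-1.
Proof.
move=> k0 hl.
set l := ln (k%:R : R) in hl *.
have e1 := expR_gt0 (1:R); have e2 := expR_gt0 (2:R).
have l0 : 0 <= l by lra.
have l1 : 1 <= l by lra.
have [hn1 hn2] := @nv_bounds k l0.
have kpos : (0 : R) < k%:R by rewrite ltr0n.
case: (boolP (0 <= xsize R k)) => hxs; last first.
  have kn : (k <= nverts R k)%N.
    rewrite -(ler_nat R); apply: le_trans hn1; rewrite -[X in X <= _]mulr1.
    by apply: ler_wpM2l; [exact: ltW | exact: l1].
  have Np : (0 < 'C(nverts R k, k))%N by rewrite bin_gt0.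
  split => //.
  have hb := bad_bound R k; rewrite big_pred0 in hb; last first.
    move=> X; apply/negbTE; apply: contra hxs => /eqP <-; done.
  have Ap : (0:R) < #|admissible R k|%:R by rewrite card_adm exprn_gt0 // ltr0n.
  rewrite ler_pdivrMr //; apply: le_trans hb _.
  by rewrite mulr_ge0 // invr_ge0 ltW.
set s := `|xsize R k|%N.
have hs : xsize R k = s%:Z by rewrite /s gez0_abs.
have hsR : (s%:R : R) <= l ^+ 2 - 10 * l * ln l.
  have -> : (s%:R : R) = (xsize R k)%:~R by rewrite hs.
  exact: floor_le.
have [Np hm] := @main_est R k (nverts R k) s l k0 erefl hl hn1 hn2 hsR.
split => //; exact: le_trans (@eps_bound R k s hs Np) hm.
Qed.
End Glue.

Unset Implicit Arguments.
Local Open Scope classical_set_scope.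

Theorem lemma1 (R : realType) : (fun k : nat => prob_good R k) @ \oo --> (1 : R).
Proof.
pose l0 : R := expR 1 + 4 * expR 2 + 6.
pose K0 := (Num.truncn (expR l0)).+1.
have hK : forall k, (K0 <= k)%N -> 1 - 2 * harmonic k <= prob_good R k <= 1.
  move=> k hk.
  have k0 : (0 < k)%N by apply: leq_trans hk.
  have kpos : (0 : R) < k%:R by rewrite ltr0n.
  have hl : l0 <= ln (k%:R : R).
    rewrite -[X in X <= _]expRK ler_ln ?posrE ?expR_gt0 //.
    apply: ltW; apply: lt_le_trans (truncnS_gt _) _; by rewrite ler_nat.
  have [Np hb] := key k0 hl.
  rewrite prob_eq //.
  set r := (_ / _ : R) in hb *.
  have r0 : 0 <= r by rewrite /r divr_ge0.
  have h2 : (k%:R : R)^-1 <= 2 * harmonic k.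
    have e : 2 * (k.+1%:R : R)^-1 = (k.+1%:R / 2)^-1 by rewrite invf_div mulrC.
    rewrite /= e lef_pV2 ?posrE ?divr_gt0 ?ltr0n // ler_pdivrMr // -natrM ler_nat.
    by rewrite muln2 -addnn -{1}(addn0 k) ltn_add2l.
  apply/andP; split; lra.
apply: (@squeeze_cvgr _ _ _ _ (fun k => 1 - 2 * harmonic k) (fun _ => 1)).
- near=> k; apply: hK; near: k; exact: nbhs_infty_ge.
- have := cvgB (cvg_cst (1:R)) (cvgMl_tmp (a := 2) (@cvg_harmonic R)).
  rewrite mulr0 subr0 => h; apply: h; typeclasses eauto.
- exact: cvg_cst.
Unshelve. all: end_near.
Qed.
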